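(* Let $M$ be an ACI-matrix over a field $\mathbb{F}$. If $F_1,F_2$ are factor sets of $M$, then $F_1\cap F_2$ and $F_1\cup F_2$ are factor sets of $M$. If $F_1,F_2$ are semifactor sets of $M$, then $F_1\cap F_2$ and $F_1\cup F_2$ are semifactor sets of $M$.
   Context: Let $\mathbb{F}$ be a field. An ACI-matrix is a matrix with entries in $\mathbb{F}[x_1,\dots,x_k]$ whose entries are polynomials of degree at most one and such that no indeterminate appears in two different columns. A completion is an assignment of values in $\mathbb{F}$ to all indeterminates; $\mathrm{maxRank}(N)$ is the maximum rank of a completion. ACI-matrices (and blocks) of size $0\times q$ ($q>0$, wide degenerate), $p\times 0$ ($p>0$, tall degenerate) and $0\times0$ (void) are allowed. $N$ is FRmR if $\mathrm{maxRank}(N)=\mathrm{rows}(N)$, FCmR if $\mathrm{maxRank}(N)=\mathrm{cols}(N)$; by convention tall degenerate is FRmR, wide degenerate is FCmR, void is both. For an $m\times n$ block matrix $\begin{bmatrix} A & B\\ 0 & C\end{bmatrix}$ with lower-left $r\times s$ zero block, the zero block is Big if $r+s>\max\{m,n\}$, Medium if $r+s=\max\{m,n\}$. For $F=\{f_1<\dots<f_s\}\subseteq\{1,\dots,n\}$ with complement $\{g_1<\dots<g_{n-s}\}$, $Q_F$ is the $n\times n$ permutation matrix such that $MQ_F$ has as columns $f_1,\dots,f_s,g_1,\dots,g_{n-s}$ of $M$ in that order. For an $m\times n$ ACI-matrix $M$, $F$ is a factor set of $M$ if there is a nonsingular constant $m\times m$ matrix $R$ with $RMQ_F=\begin{bmatrix}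 A & B\\ 0 & C\end{bmatrix}$, where $A$ has $\#F$ columns, the zero block is Big, $A$ is FRmR and $C$ is FCmR; $F$ is a semifactor set if the same holds with the zero block Medium. *)

(* Defs.v *)
From HB Require Import structures.
From mathcomp Require Import all_boot all_order all_algebra.
Set Implicit Arguments. Unset Strict Implicit. Unset Printing Implicit Defensive.
Import GRing.Theory.
Local Open Scope ring_scope.

(* An ACI-matrix of size m x n over K[x_0,...,x_{k-1}]: every entry is an
   affine polynomial  aci_const i j + \sum_t (aci_coef t) i j * x_t ;
   aci_coef t is the matrix of coefficients of the indeterminate x_t. *)
Record aci (K : fieldType) (k m n : nat) := ACI {
  aci_const : 'M[K]_(m, n);
  aci_coef  : 'I_k -> 'M[K]_(m, n) }.

Definition is_ACI (K : fieldType) k m n (N : aci K k m n) : Prop :=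
  forall (t : 'I_k) (j1 j2 : 'I_n),
    col j1 (aci_coef N t) != 0 -> col j2 (aci_coef N t) != 0 -> j1 = j2.

Definition completion (K : fieldType) k m n (N : aci K k m n) (v : 'I_k -> K)
  : 'M[K]_(m, n) := aci_const N + \sum_(t < k) v t *: aci_coef N t.

Definition is_maxRank (K : fieldType) k m n (N : aci K k m n) (r : nat) : Prop :=
  (exists v, \rank (completion N v) = r) /\ (forall v, (\rank (completion N v) <= r)%N).

Definition FRmR (K : fieldType) k m n (N : aci K k m n) : Prop :=
  n = 0%N \/ is_maxRank N m.
Definition FCmR (K : fieldType) k m n (N : aci K k m n) : Prop :=
  m = 0%N \/ is_maxRank N n.

Definition aci_map (K : fieldType) k m n m' n'
  (f : 'M[K]_(m, n) -> 'M[K]_(m', n')) (N : aci K k m n) : aci K k m' n' :=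
  ACI (f (aci_const N)) (fun t => f (aci_coef N t)).

Definition aci_mull (K : fieldType) k m n (R : 'M[K]_m) (N : aci K k m n) :=
  aci_map (fun A => R *m A) N.
Definition aci_mulr (K : fieldType) k m n (N : aci K k m n) (Q : 'M[K]_n) :=
  aci_map (fun A => A *m Q) N.

(* Submatrix with rows in I and columns in J (kept in increasing order). *)
Definition aci_sub (K : fieldType) k m n (I : {set 'I_m}) (J : {set 'I_n})
  (N : aci K k m n) : aci K k #|I| #|J| :=
  aci_map (mxsub (enum_val (A := mem I)) (enum_val (A := mem J))) N.

Definition entry_zero (K : fieldType) k m n (N : aci K k m n) (i : 'I_m) (j : 'I_n)
  : Prop := aci_const N i j = 0 /\ forall t, aci_coef N t i j = 0.

(* Q_F: the n x n permutation matrix such that M Q_F has as columns the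
   columns f_1 < ... < f_s of M followed by g_1 < ... < g_{n-s}
   (enum of a set of ordinals is increasing). *)
Definition QF (K : fieldType) n (F : {set 'I_n}) : 'M[K]_n :=
  \matrix_(i < n, j < n) ((i == nth j (enum F ++ enum (~: F)) j)%:R).

Definition factor_like (cmp : nat -> nat -> bool)
  (K : fieldType) k m n (M : aci K k m n) (F : {set 'I_n}) : Prop :=
  exists (R : 'M[K]_m), R \in unitmx /\
  exists r : nat, (r <= m)%N /\
    let N := aci_mulr (aci_mull R M) (QF K F) in
    let s := #|F| in
    let top := [set i : 'I_m | (i < m - r)%N] in
    let bot := [set i : 'I_m | (m - r <= i)%N] in
    let lft := [set j : 'I_n | (j < s)%N] in
    let rgt := [set j : 'I_n | (s <= j)%N] in
    (forall (i : 'I_m) (j : 'I_n), (m - r <= i)%N -> (j < s)%N -> entry_zero N i j)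
    /\ cmp (r + s)%N (maxn m n)
    /\ FRmR (aci_sub top lft N)
    /\ FCmR (aci_sub bot rgt N).

Definition factor_set (K : fieldType) k m n (M : aci K k m n) (F : {set 'I_n}) :=
  factor_like (fun a b => (b < a)%N) M F.
Definition semifactor_set (K : fieldType) k m n (M : aci K k m n) (F : {set 'I_n}) :=
  factor_like (fun a b => a == b) M F.

(* Main.v *)
Require Import Defs.
From mathcomp Require Import all_boot all_order all_algebra.
From mathcomp Require Import zify fingroup perm.
Set Implicit Arguments. Unset Strict Implicit. Unset Printing Implicit Defensive.
Import GRing.Theory.
Local Open Scope ring_scope.

Section Masks.
Variable K : fieldType.

Definition msk n (S : {set 'I_n}) : 'M[K]_n := diag_mx (\row_i ((i \in S)%:R)).

Lemma msk_mull m n (S : {set 'I_m}) (A : 'M[K]_(m, n)) i j :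
  (msk S *m A) i j = (i \in S)%:R * A i j.
Proof. by rewrite mul_diag_mx !mxE. Qed.

Lemma msk_mulr m n (S : {set 'I_n}) (A : 'M[K]_(m, n)) i j :
  (A *m msk S) i j = A i j * (j \in S)%:R.
Proof. by rewrite mul_mx_diag !mxE. Qed.

Lemma mskM n (S T : {set 'I_n}) : msk S *m msk T = msk (S :&: T).
Proof.
apply/matrixP=> i j; rewrite msk_mull !mxE in_setI.
by case: (i \in S); case: (i \in T); case: (i == j); rewrite /= ?mul1r ?mul0r.
Qed.

Lemma mskD n (S : {set 'I_n}) : msk S + msk (~: S) = 1%:M.
Proof.
apply/matrixP=> i j; rewrite !mxE in_setC.
by case: (i \in S); case: (i == j); rewrite /= ?addr0 ?add0r.
Qed.

Lemma msk_tr n (S : {set 'I_n}) : (msk S)^T = msk S.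
Proof. exact: tr_diag_mx. Qed.

Lemma msk0 n : msk (set0 : {set 'I_n}) = 0.
Proof. by apply/matrixP=> i j; rewrite !mxE inE mul0rn. Qed.

Lemma mskC0 n (S : {set 'I_n}) : msk S *m msk (~: S) = 0.
Proof. by rewrite mskM setICr msk0. Qed.

Definition sel n (S : {set 'I_n}) : 'M[K]_(#|S|, n) :=
  rowsub (enum_val (A := mem S)) 1%:M.

Lemma selE n (S : {set 'I_n}) a i : sel S a i = (enum_val (A := mem S) a == i)%:R.
Proof. by rewrite !mxE. Qed.

Lemma sel_selT n (S : {set 'I_n}) : sel S *m (sel S)^T = 1%:M.
Proof.
apply/matrixP=> a b; rewrite !mxE (bigD1 (enum_val (A := mem S) a)) //=.
rewrite big1 ?addr0; last first.
  by move=> i /negPf Hi; rewrite !mxE eq_sym Hi mul0r.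
rewrite !mxE eqxx mul1r (inj_eq enum_val_inj) eq_sym //.
Qed.

Lemma selT_sel n (S : {set 'I_n}) : (sel S)^T *m sel S = msk S.
Proof.
apply/matrixP=> i j; rewrite !mxE.
have H a : (sel S)^T i a * sel S a j = (enum_val (A := mem S) a == i)%:R * (i == j)%:R.
  rewrite !mxE; case: eqP => [->|]; last by rewrite !mul0r.
  by rewrite !mul1r.
rewrite (eq_bigr _ (fun a _ => H a)) -mulr_suml.
case Hi: (i \in S).
  rewrite (bigD1 (enum_rank_in Hi i)) //= big1 ?addr0.
    by rewrite enum_rankK_in // eqxx mul1r /= mulr1n.
  move=> a Ha; case: eqP => // E; case/eqP: Ha.
  by rewrite -[a](enum_valK_in Hi) E.
rewrite big1 ?mul0r ?mul0rn //.
by move=> a _; case: eqP => // E; move: (enum_valP a); rewrite E Hi.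
Qed.


Lemma mxsub_sel m n (I : {set 'I_m}) (J : {set 'I_n}) (A : 'M[K]_(m, n)) :
  mxsub (enum_val (A := mem I)) (enum_val (A := mem J)) A = sel I *m A *m (sel J)^T.
Proof.
rewrite -{1}[A]mulmx1 mxsub_mul rowsubE; congr (_ *m _).
by apply/matrixP=> i j; rewrite !mxE eq_sym.
Qed.

Lemma rank_mxsub m n (I : {set 'I_m}) (J : {set 'I_n}) (A : 'M[K]_(m, n)) :
  \rank (mxsub (enum_val (A := mem I)) (enum_val (A := mem J)) A)
  = \rank (msk I *m A *m msk J).
Proof.
rewrite mxsub_sel; apply/eqP; rewrite eqn_leq; apply/andP; split.
  have -> : sel I *m A *m (sel J)^T =
     sel I *m (msk I *m A *m msk J) *m (sel J)^T.
    rewrite -!selT_sel !mulmxA sel_selT mul1mx -!mulmxA.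
    by rewrite sel_selT mulmx1.
  by apply: leq_trans (mxrankM_maxl _ _) _; apply: mxrankM_maxr.
have -> : msk I *m A *m msk J = (sel I)^T *m (sel I *m A *m (sel J)^T) *m sel J.
  by rewrite -!selT_sel !mulmxA.
by apply: leq_trans (mxrankM_maxl _ _) _; apply: mxrankM_maxr.
Qed.

Lemma msk_rank n (S : {set 'I_n}) : \rank (msk S) = #|S|.
Proof.
apply/eqP; rewrite eqn_leq; apply/andP; split.
  by rewrite -selT_sel; apply: leq_trans (mxrankM_maxr _ _) (rank_leq_row _).
have := rank_mxsub S S 1%:M; rewrite mulmx1 mskM setIid => <-.
by rewrite mxsub_sel mulmx1 sel_selT mxrank1.
Qed.

Lemma card_lt m a : (a <= m)%N -> #|[set i : 'I_m | (i < a)%N]| = a.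
Proof.
move=> am.
have -> : [set i : 'I_m | (i < a)%N] = (widen_ord am) @: [set: 'I_a].
  apply/setP => i; rewrite inE; apply/idP/imsetP => [H|[j _ ->]] //=.
  exists (Ordinal H); first by rewrite inE.
  by apply/val_inj.
rewrite card_imset ?cardsT ?card_ord // => x y /(congr1 val) /= xy; exact: val_inj.
Qed.


Section QFsec.
Variables (n : nat) (F : {set 'I_n}).
Let l := enum F ++ enum (~: F).

Lemma size_l : size l = n.
Proof. by rewrite size_cat -!cardE cardsC card_ord. Qed.

Lemma nth_l_in (j : 'I_n) : (nth j l j \in F) = (j < #|F|)%N.
Proof.
have E : (size (enum F) + size (enum (~: F)))%N = n by rewrite -size_cat size_l.
rewrite nth_cat cardE; case: ifP => H.
  by have := mem_nth j H; rewrite mem_enum.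
have H2 : (j - size (enum F) < size (enum (~: F)))%N.
  move/negbT: H; rewrite -leqNgt => H; have := ltn_ord j; move: H E; move: (size (enum F)) (size (enum (~: F))) (nat_of_ord j) => a b c; lia.
by have := mem_nth j H2; rewrite mem_enum inE => /negPf.
Qed.

Lemma sig_inj : injective (fun j : 'I_n => nth j l j).
Proof.
move=> i j /= E; apply/val_inj => /=.
have Hi : (i < size l)%N by rewrite size_l.
have Hj : (j < size l)%N by rewrite size_l.
move: E; rewrite (set_nth_default i j Hj) => /eqP.
rewrite nth_uniq //; first by move/eqP.
by rewrite cat_uniq !enum_uniq /= andbT; apply/hasPn => x; rewrite !mem_enum inE => ->.
Qed.

Definition sig : 'S_n := perm sig_inj.

Lemma QF_perm : QF K F = (perm_mx sig)^T.
Proof. by apply/matrixP => i j; rewrite !mxE permE eq_sym. Qed.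

Lemma QF_unit : QF K F \in unitmx.
Proof.
rewrite QF_perm unitmx_tr.
have E : perm_mx sig *m perm_mx sig^-1 = 1%:M :> 'M[K]_n.
  by rewrite -perm_mxM mulgV perm_mx1.
by case: (mulmx1_unit E).
Qed.

Lemma QF_msk (S T : {set 'I_n}) :
  (forall j, (nth j l j \in S) = (j \in T)) -> QF K F *m msk T = msk S *m QF K F.
Proof.
move=> H; apply/matrixP => i j; rewrite msk_mull msk_mulr !mxE.
case: eqP => [->|]; last by rewrite mulr0 mul0r.
by rewrite H mul1r mulr1.
Qed.

End QFsec.


Section Blocks.
Variables (m n : nat) (T : {set 'I_m}) (L : {set 'I_n}) (P : 'M[K]_(m, n)).
Hypothesis Z : msk (~: T) *m P *m msk L = 0.

Lemma splitR (X : 'M[K]_(m, n)) : X = X *m msk L + X *m msk (~: L).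
Proof. by rewrite -mulmxDr mskD mulmx1. Qed.
Lemma splitL (X : 'M[K]_(m, n)) : X = msk T *m X + msk (~: T) *m X.
Proof. by rewrite -mulmxDl mskD mul1mx. Qed.

Lemma PL : P *m msk L = msk T *m P *m msk L.
Proof. by rewrite {1}(splitL P) mulmxDl Z addr0. Qed.
Lemma PB : msk (~: T) *m P = msk (~: T) *m P *m msk (~: L).
Proof. by rewrite {1}(splitR (msk (~: T) *m P)) Z add0r. Qed.

Lemma blockU1 : (\rank P <= \rank (msk T *m P *m msk L) + #|~: L|)%N.
Proof.
rewrite {1}(splitR P) PL; apply: leq_trans (mxrank_add _ _) _.
by rewrite leq_add2l -msk_rank mxrankM_maxr.
Qed.

Lemma blockU2 : (\rank P <= #|T| + \rank (msk (~: T) *m P *m msk (~: L)))%N.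
Proof.
rewrite {1}(splitL P) PB; apply: leq_trans (mxrank_add _ _) _.
apply: leq_add; first by apply: leq_trans (mxrankM_maxl _ _) _; rewrite msk_rank.
by rewrite -[X in (_ <= \rank X)%N]mulmxA mskM setIid.
Qed.

Lemma blockLow :
  (\rank (msk T *m P *m msk L) + \rank (msk (~: T) *m P *m msk (~: L)) <= \rank P)%N.
Proof.
rewrite -(mxrank_mul_ker P (msk L)) PL leq_add2l; apply: mxrankS.
rewrite sub_capmx -PB submxMl /=; apply/sub_kermxP.
by rewrite PB -mulmxA mskM setIC setICr msk0 mulmx0.
Qed.

End Blocks.


Lemma rankRQ m n (R : 'M[K]_m) (X : 'M[K]_(m, n)) (Q : 'M[K]_n) :
  R \in unitmx -> Q \in unitmx -> \rank (R *m X *m Q) = \rank X.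
Proof.
move=> Ru Qu; rewrite mxrankMfree ?row_free_unit //.
by rewrite (eqmxMfull _ (_ : row_full R)) // row_full_unit.
Qed.

Lemma compl_entry k m n (N : aci K k m n) v i j :
  completion N v i j = aci_const N i j + \sum_(t < k) v t * aci_coef N t i j.
Proof.
rewrite /completion mxE summxE; congr (_ + _); apply: eq_bigr => t _; by rewrite mxE.
Qed.

Lemma compl_mul k m n (R : 'M[K]_m) (N : aci K k m n) (Q : 'M[K]_n) v :
  completion (aci_mulr (aci_mull R N) Q) v = R *m completion N v *m Q.
Proof.
rewrite /completion /= mulmxDr mulmxDl mulmx_sumr mulmx_suml; congr (_ + _).
by apply: eq_bigr => t _; rewrite -scalemxAr -scalemxAl.
Qed.

Lemma compl_sub k m n (I : {set 'I_m}) (J : {set 'I_n}) (N : aci K k m n) v :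
  completion (aci_sub I J N) v =
  mxsub (enum_val (A := mem I)) (enum_val (A := mem J)) (completion N v).
Proof.
apply/matrixP => i j; rewrite compl_entry [RHS]mxE compl_entry /=.
rewrite mxE; congr (_ + _); apply: eq_bigr => t _; by rewrite mxE.
Qed.

Lemma compl_eq k m n (N : aci K k m n) v v' j :
  (forall t i, aci_coef N t i j != 0 -> v t = v' t) ->
  forall i, completion N v i j = completion N v' i j.
Proof.
move=> H i; rewrite !compl_entry; congr (_ + _); apply: eq_bigr => t _.
case: (eqVneq (aci_coef N t i j) 0) => [->|/H ->]; by rewrite ?mulr0.
Qed.

Lemma Zcompl k m n (N : aci K k m n) (B : {set 'I_m}) (L : {set 'I_n}) :
  (forall i j, i \in B -> j \in L -> entry_zero N i j) ->
  forall v, msk B *m completion N v *m msk L = 0.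
Proof.
move=> H v; apply/matrixP => i j; rewrite msk_mulr msk_mull !mxE.
case Hi: (i \in B); case Hj: (j \in L); rewrite /= ?mulr0 ?mul0r //.
have [H1 H2] := H i j Hi Hj.
rewrite mul1r mulr1 H1 add0r summxE big1 // => t _; by rewrite mxE H2 mulr0.
Qed.

Lemma Zcoef k m n (N : aci K k m n) (B : {set 'I_m}) (L : {set 'I_n}) :
  (forall i j, i \in B -> j \in L -> entry_zero N i j) ->
  msk B *m aci_const N *m msk L = 0 /\ forall t, msk B *m aci_coef N t *m msk L = 0.
Proof.
move=> H; split => [|t]; apply/matrixP => i j; rewrite msk_mulr msk_mull !mxE;
  case Hi: (i \in B); case Hj: (j \in L); rewrite /= ?mulr0 ?mul0r //;
  have [H1 H2] := H i j Hi Hj; rewrite ?H1 ?H2; by rewrite ?mulr0 ?mul0r.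
Qed.

Lemma QF_lft n (F : {set 'I_n}) :
  QF K F *m msk [set j : 'I_n | (j < #|F|)%N] = msk F *m QF K F.
Proof. by apply: QF_msk => j; rewrite nth_l_in inE. Qed.

Lemma QF_rgt n (F : {set 'I_n}) :
  QF K F *m msk [set j : 'I_n | (#|F| <= j)%N] = msk (~: F) *m QF K F.
Proof. by apply: QF_msk => j; rewrite in_setC (nth_l_in F j) inE ltnNge negbK. Qed.

Lemma cancelQ m n (F : {set 'I_n}) (X : 'M[K]_(m, n)) :
  X *m QF K F *m msk [set j : 'I_n | (j < #|F|)%N] = 0 -> X *m msk F = 0.
Proof.
rewrite -mulmxA QF_lft mulmxA => H.
by rewrite -[X *m _](mulmxK (QF_unit F)) H mul0mx.
Qed.

Section ACIsec.
Variables (k m n : nat) (M : aci K k m n).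

Definition WF (F : {set 'I_n}) : 'M[K]_m :=
  (<<msk F *m (aci_const M)^T>> + \sum_(t < k) <<msk F *m (aci_coef M t)^T>>)%MS.
Definition w F := \rank (WF F).

Lemma WF_le F (Y : 'M[K]_m) :
  (msk F *m (aci_const M)^T <= Y)%MS ->
  (forall t, msk F *m (aci_coef M t)^T <= Y)%MS -> (WF F <= Y)%MS.
Proof.
move=> H1 H2; rewrite /WF addsmx_sub genmxE H1 /=.
by apply/sumsmx_subP => t _; rewrite genmxE; exact: H2.
Qed.

Lemma WF_const F : (msk F *m (aci_const M)^T <= WF F)%MS.
Proof. by apply: submx_trans (addsmxSl _ _); rewrite genmxE. Qed.
Lemma WF_coef F t : (msk F *m (aci_coef M t)^T <= WF F)%MS.
Proof. by apply: submx_trans (addsmxSr _ _); apply: (sumsmx_sup t); rewrite ?genmxE. Qed.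

Lemma w_le F : (w F <= m)%N.
Proof. exact: rank_leq_col. Qed.

Lemma compl_WF F v : (msk F *m (completion M v)^T <= WF F)%MS.
Proof.
rewrite /completion linearD /= mulmxDr; apply: addmx_sub; first exact: WF_const.
rewrite linear_sum mulmx_sumr; apply: summx_sub => t _.
by rewrite linearZ /= -scalemxAr; apply: scalemx_sub; apply: WF_coef.
Qed.

Lemma rank_bound (G : {set 'I_n}) v : (\rank (completion M v) + #|G| <= n + w G)%N.
Proof.
set X := completion M v.
have E := cardsC G; rewrite card_ord in E.
have H1 : (\rank (X *m msk G) <= w G)%N.
  by rewrite -mxrank_tr trmx_mul msk_tr; apply: mxrankS; apply: compl_WF.
have H2 : (\rank (X *m msk (~: G)) <= #|~: G|)%N.
  by rewrite -msk_rank mxrankM_maxr.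
have H3 := mxrank_add (X *m msk G) (X *m msk (~: G)).
rewrite -splitR in H3.
lia.
Qed.

Lemma annih p F (L : 'M[K]_(p, m)) :
  L *m aci_const M *m msk F = 0 -> (forall t, L *m aci_coef M t *m msk F = 0) ->
  (w F + \rank L <= m)%N.
Proof.
move=> H1 H2.
have S : (WF F <= kermx L^T)%MS.
  apply: WF_le; [|move=> t]; apply/sub_kermxP;
  by rewrite -msk_tr -!trmx_mul mulmxA ?H1 ?H2 trmx0.
have := mxrankS S; rewrite mxrank_ker mxrank_tr -/(w F).
have := rank_leq_col L; lia.
Qed.


Lemma construct F : exists2 R : 'M[K]_m, R \in unitmx &
  (forall C : 'M[K]_(m, n), (msk F *m C^T <= WF F)%MS ->
     msk [set i : 'I_m | (w F <= i)%N] *m R *m (C *m msk F) = 0).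
Proof.
set Wt := (WF F)^T.
exists (invmx (col_ebase Wt)); first by rewrite unitmx_inv col_ebase_unit.
move=> C /submxP [D HD].
have -> : C *m msk F = Wt *m D^T.
  by apply: trmx_inj; rewrite !trmx_mul msk_tr !trmxK HD.
rewrite -{2}(mulmx_ebase Wt) !mulmxA -[msk _ *m invmx _ *m _]mulmxA mulVmx ?col_ebase_unit // mulmx1.
rewrite mxrank_tr -/(w F).
have -> : msk [set i : 'I_m | (w F <= i)%N] *m pid_mx (w F) = 0 :> 'M[K]_m.
  apply/matrixP => i j; rewrite msk_mull !mxE inE.
  by case: leqP => _; rewrite ?mul0r // andbF mulr0.
by rewrite !mul0mx.
Qed.

Lemma WF_sub_mul (F G : {set 'I_n}) (X : 'M[K]_n) : msk G = X *m msk F -> (WF G <= WF F)%MS.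
Proof.
move=> HX; apply: WF_le => [|t]; rewrite HX -mulmxA;
  apply: submx_trans (submxMl _ _) _; [exact: WF_const | exact: WF_coef].
Qed.

Lemma mskU (F1 F2 : {set 'I_n}) : msk (F1 :|: F2) = msk F1 + msk (F2 :\: F1) *m msk F2.
Proof.
apply/matrixP => i j; rewrite [LHS]mxE [RHS]mxE msk_mull !mxE !inE.
by case: (i \in F1); case: (i \in F2); case: (i == j);
  rewrite /= ?mul1r ?mul0r ?addr0 ?add0r.
Qed.

Lemma submod (F1 F2 : {set 'I_n}) : (w (F1 :&: F2) + w (F1 :|: F2) <= w F1 + w F2)%N.
Proof.
rewrite -[(w F1 + w F2)%N]mxrank_sum_cap addnC leq_add //; apply: mxrankS.
  apply: WF_le => [|t]; rewrite mskU mulmxDl -mulmxA; apply: addmx_sub.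
  - by apply: submx_trans (addsmxSl _ _); apply: WF_const.
  - by apply: submx_trans (addsmxSr _ _); apply: submx_trans (submxMl _ _) _; apply: WF_const.
  - by apply: submx_trans (addsmxSl _ _); apply: WF_coef.
  - by apply: submx_trans (addsmxSr _ _); apply: submx_trans (submxMl _ _) _; apply: WF_coef.
rewrite sub_capmx; apply/andP; split; apply: (WF_sub_mul (X := msk (F1 :&: F2))).
  by rewrite mskM setIAC setIid.
by rewrite mskM -setIA setIid.
Qed.

Lemma col_nz (C : 'M[K]_(m, n)) i j : C i j != 0 -> col j C != 0.
Proof.
move=> H; apply/eqP => E; move/eqP: H; apply.
by have := congr1 (fun X : 'M[K]_(m, 1) => X i 0) E; rewrite !mxE.
Qed.

Lemma combine (F : {set 'I_n}) (va vc : 'I_k -> K) : is_ACI M -> exists v,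
  (completion M v *m msk F = completion M va *m msk F) /\
  (completion M v *m msk (~: F) = completion M vc *m msk (~: F)).
Proof.
move=> Haci.
pose v t := if [exists j in F, col j (aci_coef M t) != 0] then va t else vc t.
exists v; split; apply/matrixP => i j; rewrite !msk_mulr ?inE;
  case Hj: (j \in F); rewrite /= ?mulr0 ?mulr1 //; apply: compl_eq.
  move=> t i' /col_nz Hc; rewrite /v.
  suff -> : [exists j0 in F, col j0 (aci_coef M t) != 0] by [].
  by apply/existsP; exists j; rewrite Hj.
move=> t i' /col_nz Hc; rewrite /v.
case: existsP => // [[j' /andP [Hj' Hc']]].
by move: Hj'; rewrite -(Haci t j j' Hc Hc') Hj.
Qed.

Lemma PQ_lft (R : 'M[K]_m) (F : {set 'I_n}) v :
  R *m completion M v *m QF K F *m msk [set j : 'I_n | (j < #|F|)%N]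
  = R *m (completion M v *m msk F) *m QF K F.
Proof. by rewrite -mulmxA QF_lft !mulmxA. Qed.

Lemma PQ_rgt (R : 'M[K]_m) (F : {set 'I_n}) v :
  R *m completion M v *m QF K F *m msk [set j : 'I_n | (#|F| <= j)%N]
  = R *m (completion M v *m msk (~: F)) *m QF K F.
Proof. by rewrite -mulmxA QF_rgt !mulmxA. Qed.

Lemma setC_lt p a : [set i : 'I_p | (a <= i)%N] = ~: [set i : 'I_p | (i < a)%N].
Proof. by apply/setP => i; rewrite !inE ltnNge negbK. Qed.

Lemma card_ge p a : (a <= p)%N -> #|[set i : 'I_p | (a <= i)%N]| = (p - a)%N.
Proof.
move=> ap; rewrite setC_lt; have := cardsC [set i : 'I_p | (i < a)%N].
rewrite card_ord card_lt //; lia.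
Qed.

Lemma fl_forward (cmp : nat -> nat -> bool)
  (hc : forall a b, cmp a b -> (b <= a)%N) (F : {set 'I_n}) :
  is_ACI M -> factor_like cmp M F ->
  exists c, [/\ cmp c (maxn m n),
     (exists v, (m + n <= \rank (completion M v) + c)%N) & (m + #|F| = c + w F)%N].
Proof.
move=> Haci [R [Ru [r [rm H]]]].
case: H => Hz [Hcmp [HA HC]].
set s := #|F| in Hz Hcmp HA HC *.
have hs : (s <= n)%N by have := max_card (mem F); rewrite card_ord.
have hcm := hc _ _ Hcmp.
have Htop : #|[set i : 'I_m | (i < m - r)%N]| = (m - r)%N by rewrite card_lt ?leq_subr.
have Hlft : #|[set j : 'I_n | (j < s)%N]| = s by rewrite card_lt.
have Hbot : #|[set i : 'I_m | (m - r <= i)%N]| = r.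
  by rewrite card_ge ?leq_subr // subKn.
have Hrgt : #|[set j : 'I_n | (s <= j)%N]| = (n - s)%N by rewrite card_ge.
have Hz' : forall i j, i \in [set i : 'I_m | (m - r <= i)%N] ->
    j \in [set j : 'I_n | (j < s)%N] ->
    entry_zero (aci_mulr (aci_mull R M) (QF K F)) i j.
  by move=> i j; rewrite !inE; apply: Hz.
have [va Hva] : exists va, (m - r <= \rank (msk [set i : 'I_m | (i < m - r)%N] *m
      (R *m completion M va *m QF K F) *m msk [set j : 'I_n | (j < s)%N]))%N.
  case: HA => [H0|[[va Hva] _]].
    exists (fun _ => 0); have -> : (m - r = 0)%N by move: H0 hcm; rewrite Hlft; lia.
    by [].
  by exists va; move: Hva; rewrite compl_sub rank_mxsub compl_mul Htop => ->.
have [vc Hvc] : exists vc, (n - s <= \rank (msk [set i : 'I_m | (m - r <= i)%N] *m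
      (R *m completion M vc *m QF K F) *m msk [set j : 'I_n | (s <= j)%N]))%N.
  case: HC => [H0|[[vc Hvc] _]].
    exists (fun _ => 0); have -> : (n - s = 0)%N by move: H0 hcm; rewrite Hbot; lia.
    by [].
  by exists vc; move: Hvc; rewrite compl_sub rank_mxsub compl_mul Hrgt => ->.
have [v [Ev1 Ev2]] := combine F va vc Haci.
have Zv := Zcompl Hz' v; rewrite compl_mul setC_lt in Zv.
have Low := blockLow Zv.
rewrite -setC_lt -setC_lt (rankRQ (completion M v) Ru (QF_unit F)) in Low.
have E1 : msk [set i : 'I_m | (i < m - r)%N] *m (R *m completion M v *m QF K F)
      *m msk [set j : 'I_n | (j < s)%N] =
    msk [set i : 'I_m | (i < m - r)%N] *m (R *m completion M va *m QF K F)
      *m msk [set j : 'I_n | (j < s)%N].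
  by rewrite -!mulmxA; congr (_ *m _); rewrite !mulmxA PQ_lft Ev1 -PQ_lft.
have E2 : msk [set i : 'I_m | (m - r <= i)%N] *m (R *m completion M v *m QF K F)
      *m msk [set j : 'I_n | (s <= j)%N] =
    msk [set i : 'I_m | (m - r <= i)%N] *m (R *m completion M vc *m QF K F)
      *m msk [set j : 'I_n | (s <= j)%N].
  by rewrite -!mulmxA; congr (_ *m _); rewrite !mulmxA PQ_rgt Ev2 -PQ_rgt.
rewrite E1 E2 in Low.
have [Zc Zt] := Zcoef Hz'.
have HL : (w F + \rank (msk [set i : 'I_m | (m - r <= i)%N] *m R) <= m)%N.
  apply: annih.
    apply: cancelQ; rewrite -!mulmxA; move: Zc => /=; by rewrite !mulmxA.
  move=> t; apply: cancelQ; rewrite -!mulmxA; move: (Zt t) => /=; by rewrite !mulmxA.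
rewrite mxrankMfree ?row_free_unit // msk_rank Hbot in HL.
have RB := rank_bound F v.
exists (r + s)%N; split => //.
  by exists v; move: Low Hva Hvc; lia.
by move: Low Hva Hvc RB HL; lia.
Qed.

Lemma fl_backward (cmp : nat -> nat -> bool) (F : {set 'I_n}) c :
  cmp c (maxn m n) -> (exists v, (m + n <= \rank (completion M v) + c)%N) ->
  (m + #|F| = c + w F)%N -> factor_like cmp M F.
Proof.
move=> Hcmp [v0 Hv0] Hc.
have [R Ru HR] := construct F.
exists R; split => //; exists (m - w F)%N; split; first exact: leq_subr.
have hw := w_le F.
have hs : (#|F| <= n)%N by have := max_card (mem F); rewrite card_ord.
rewrite subKn //.
set s := #|F|.
set N := aci_mulr (aci_mull R M) (QF K F).
have Hz : forall i j, i \in [set i : 'I_m | (w F <= i)%N] ->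
    j \in [set j : 'I_n | (j < s)%N] -> entry_zero N i j.
  move=> i j Hi Hj.
  have key : forall C : 'M[K]_(m, n), (msk F *m C^T <= WF F)%MS ->
      (R *m C *m QF K F) i j = 0.
    move=> C HC.
    have := congr1 (fun X : 'M[K]_(m, n) => X i j)
      (_ : msk [set i : 'I_m | (w F <= i)%N] *m (R *m C *m QF K F)
           *m msk [set j : 'I_n | (j < s)%N] = 0).
    rewrite msk_mulr msk_mull Hi Hj mul1r mulr1 => -> ; first by rewrite mxE.
    rewrite -!mulmxA QF_lft.
    have -> : forall Y : 'M[K]_m, Y *m (R *m (C *m (msk F *m QF K F))) =
       Y *m R *m (C *m msk F) *m QF K F by move=> Y; rewrite !mulmxA.
    by rewrite HR // mul0mx.
  by split => [|t]; apply: key; [apply: WF_const | apply: WF_coef].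
have Zv := Zcompl Hz v0; rewrite /N compl_mul setC_lt in Zv.
have U1 := blockU1 Zv; have U2 := blockU2 Zv.
rewrite (rankRQ (completion M v0) Ru (QF_unit F)) in U1 U2.
rewrite -setC_lt in U2.
have Htop : #|[set i : 'I_m | (i < w F)%N]| = w F by rewrite card_lt.
have Hrgt : #|[set j : 'I_n | (s <= j)%N]| = (n - s)%N by rewrite card_ge.
have Hlft' : #|~: [set j : 'I_n | (j < s)%N]| = (n - s)%N by rewrite -setC_lt.
rewrite Hlft' in U1; rewrite Htop in U2.
cbv zeta.
split; first by move=> i j Hi Hj; apply: Hz; rewrite inE.
split; first by move: Hcmp; have -> : (m - w F + s = c)%N by lia.
split; right; split.
- exists v0; rewrite compl_sub rank_mxsub compl_mul Htop; apply/eqP.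
  rewrite eqn_leq; apply/andP; split; last by lia.
  do 2 apply: leq_trans (mxrankM_maxl _ _) _; by rewrite msk_rank Htop.
- by move=> v; apply: rank_leq_row.
- exists v0; rewrite compl_sub rank_mxsub compl_mul Hrgt; apply/eqP.
  rewrite eqn_leq; apply/andP; split; last by rewrite -setC_lt in U2; lia.
  apply: leq_trans (mxrankM_maxr _ _) _; by rewrite msk_rank Hrgt.
- by move=> v; apply: rank_leq_col.
Qed.

End ACIsec.

End Masks.

Theorem theorem5p6 (K : fieldType) (k m n : nat) (M : aci K k m n) :
  is_ACI M ->
  forall F1 F2 : {set 'I_n},
    (factor_set M F1 -> factor_set M F2 ->
       factor_set M (F1 :&: F2) /\ factor_set M (F1 :|: F2)) /\
    (semifactor_set M F1 -> semifactor_set M F2 ->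
       semifactor_set M (F1 :&: F2) /\ semifactor_set M (F1 :|: F2)).
Proof.
move=> Haci F1 F2.
have gen : forall cmp : nat -> nat -> bool, (forall a b, cmp a b -> (b <= a)%N) ->
    factor_like cmp M F1 -> factor_like cmp M F2 ->
    factor_like cmp M (F1 :&: F2) /\ factor_like cmp M (F1 :|: F2).
  move=> cmp hc H1 H2.
  have [c1 [Hc1 [v1 Hv1] E1]] := fl_forward hc Haci H1.
  have [c2 [_ [v2 Hv2] E2]] := fl_forward hc Haci H2.
  have le1 : forall G : {set 'I_n}, (m + #|G| <= c1 + w M G)%N.
    by move=> G; have := rank_bound M G v1; lia.
  have le2 : forall G : {set 'I_n}, (m + #|G| <= c2 + w M G)%N.
    by move=> G; have := rank_bound M G v2; lia.
  have Sm := submod M F1 F2; have Cd := cardsUI F1 F2.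
  have L1 := le1 (F1 :&: F2); have L2 := le1 (F1 :|: F2).
  have L3 := le2 F1; have L4 := le1 F2.
  by split; apply: (fl_backward Hc1 (ex_intro _ v1 Hv1)); lia.
split.
  by apply: gen => a b /ltnW.
by apply: gen => a b /eqP ->.
Qed.
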